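(* Consider an agent-dependent SDP performance estimation problem (PEP) for distributed optimization with $n$ agents, and let $(F,G)$, $F=[f_1^T\dots f_n^T]\in\mathbb{R}^{nq}$, $G=[G_{ij}]_{i,j=1}^n\in\mathbb{R}^{np\times np}$, be any feasible solution. Let $\{\mathcal{V}_1,\dots,\mathcal{V}_U\}$ be the partition of the agent set $\mathcal{V}=\{1,\dots,n\}$ into equivalence classes of agents, with $n_u=|\mathcal{V}_u|$ and $u_i$ the index of the class containing agent $i$. Define $F^s=[(f_1^s)^T\dots(f_n^s)^T]$ and $G^s=[G^s_{ij}]$ by $$f_i^s=\frac{1}{n_{u_i}}\sum_{k\in\mathcal{V}_{u_i}}f_k,\qquad G^s_{ij}=\begin{cases}\frac{1}{n_{u_i}}\sum_{k\in\mathcal{V}_{u_i}}G_{kk}, & i=j,\\[1mm] \frac{1}{n_{u_i}(n_{u_i}-1)}\sum_{k\in\mathcal{V}_{u_i}}\sum_{l\in\mathcal{V}_{u_i},\,l\ne k}G_{kl}, & j\ne i,\ j\in\mathcal{V}_{u_i},\\[1mm] \frac{1}{n_{u_i}n_{u_j}}\sum_{k\in\mathcal{V}_{u_i}}\sum_{l\in\mathcal{V}_{u_j}}G_{kl}, & j\notin\mathcal{V}_{u_i}.\end{cases}$$ Then $(F^s,G^s)$ is a feasible solution of the PEP and $\mathcal{P}(F^s,G^s)=\mathcal{P}(F,G)$.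
   Context: Distributed optimization: $n$ agents with local functions $f_i:\mathbb{R}^d\to\mathbb{R}$ aim to minimize $f(x)=\frac1n\sum_i f_i(x)$ via an algorithm built from local gradient evaluations, consensus steps $y_i=\sum_j w_{ij}x_j$ with averaging matrices from a given class, and linear combinations of each agent's local variables. In the agent-dependent SDP PEP, each agent $i$ holds $p$ vector variables (its iterates, consensus outputs, gradients, and copies of points common to all agents such as the minimizer $x^*$), gathered as the columns of $P_i\in\mathbb{R}^{d\times p}$ in the same order for all agents, and $q$ function values gathered in $f_i\in\mathbb{R}^q$. The variables are $F=[f_1^T\dots f_n^T]$ and the Gram matrix $G=P^TP\succeq0$ with $P=[P_1\dots P_n]$, so $G_{ij}=P_i^TP_j$; the objective $\mathcal{P}(F,G)$ (performance criterion) and all constraints (algorithm constraints, function-class interpolation constraints, initial conditions, optimality condition $\frac1n\sum_i\nabla f_i(x^* )=0$, consensus constraints) are linear constraints or linear matrix inequalities in $(F,G)$, together with $G\succeq0$. Two agents $i,j$ are equivalent if, for every feasible $(F,G)$, the solution obtained by permuting the blocks of agents $i$ and $j$ (in $F$ and in the block rows and columns of $G$) is again feasible and has the same objective value; this is an equivalence relation whose classes partition $\mathcal{V}$. *)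

(* Defs.v *)
From HB Require Import structures.
From mathcomp Require Import all_boot all_order all_algebra all_fingroup.
Set Implicit Arguments. Unset Strict Implicit. Unset Printing Implicit Defensive.
Import Order.TTheory GRing.Theory Num.Theory.
Local Open Scope ring_scope.

Section PEP.
Variables (R : realFieldType) (n p q : nat).

(* Variables of the PEP:
   F i t   = t-th function value of agent i          (F = [f_1^T ... f_n^T])
   G i a j b = entry (a,b) of the block G_ij = P_i^T P_j. *)
Definition Fvar := 'I_n -> 'I_q -> R.
Definition Gvar := 'I_n -> 'I_p -> 'I_n -> 'I_p -> R.

Record aform := AForm {
  af0 : R;
  afF : 'I_n -> 'I_q -> R;
  afG : 'I_n -> 'I_p -> 'I_n -> 'I_p -> R }.

Definition aeval (e : aform) (F : Fvar) (G : Gvar) : R :=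
  af0 e + \sum_i \sum_t afF e i t * F i t
        + \sum_i \sum_a \sum_j \sum_b afG e i a j b * G i a j b.

Definition psdmx (m : nat) (M : 'M[R]_m) : Prop :=
  M^T = M /\ forall x : 'rV[R]_m, 0 <= (x *m M *m x^T) 0 0.

Definition psdG (G : Gvar) : Prop :=
  (forall i a j b, G i a j b = G j b i a) /\
  forall x : 'I_n -> 'I_p -> R,
    0 <= \sum_i \sum_a \sum_j \sum_b x i a * G i a j b * x j b.

(* A PEP: linear equalities, linear inequalities, LMIs (matrix-valued affine
   functions of (F,G) required to be PSD), and a performance criterion. *)
Unset Implicit Arguments.
Record pep := Pep {
  neq : nat; eqc : 'I_neq -> aform;
  nin : nat; inc : 'I_nin -> aform;
  nlmi : nat; lmidim : 'I_nlmi -> nat;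
  lmic : forall l : 'I_nlmi, 'I_(lmidim l) -> 'I_(lmidim l) -> aform;
  perf : aform }.
Set Implicit Arguments.

Definition feasible (P : pep) (F : Fvar) (G : Gvar) : Prop :=
  psdG G /\
  (forall k, aeval (eqc P k) F G = 0) /\
  (forall k, 0 <= aeval (inc P k) F G) /\
  (forall l, psdmx (\matrix_(r, s) aeval (lmic P l r s) F G)).

Definition objective (P : pep) (F : Fvar) (G : Gvar) : R := aeval (perf P) F G.

Definition swapF (i j : 'I_n) (F : Fvar) : Fvar :=
  fun k t => F (tperm i j k) t.
Definition swapG (i j : 'I_n) (G : Gvar) : Gvar :=
  fun k a l b => G (tperm i j k) a (tperm i j l) b.

Definition agents_equiv (P : pep) (i j : 'I_n) : Prop :=
  forall F G, feasible P F G ->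
    feasible P (swapF i j F) (swapG i j G) /\
    objective P (swapF i j F) (swapG i j G) = objective P F G.

Definition csize (U : nat) (c : 'I_n -> 'I_U) (u : 'I_U) : nat :=
  #|[set k | c k == u]|.

Definition symF (U : nat) (c : 'I_n -> 'I_U) (F : Fvar) : Fvar :=
  fun i t => ((csize c (c i))%:R)^-1 * \sum_(k | c k == c i) F k t.

Definition symG (U : nat) (c : 'I_n -> 'I_U) (G : Gvar) : Gvar :=
  fun i a j b =>
    if i == j then
      ((csize c (c i))%:R)^-1 * \sum_(k | c k == c i) G k a k b
    else if c j == c i then
      ((csize c (c i) * (csize c (c i)).-1)%:R)^-1 *
        \sum_(k | c k == c i) \sum_(l | (c l == c i) && (l != k)) G k a l b
    else
      ((csize c (c i) * csize c (c j))%:R)^-1 *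
        \sum_(k | c k == c i) \sum_(l | c l == c j) G k a l b.

End PEP.

(* Main.v *)
Require Import Defs.
From HB Require Import structures.
From mathcomp Require Import all_boot all_order all_algebra all_fingroup ring.
From Stdlib Require Import FunctionalExtensionality.
Import Order.TTheory GRing.Theory Num.Theory.
Local Open Scope ring_scope.

Lemma avg_nz (R : realFieldType) (I : finType) (A : {pred I}) :
  (0 < #|A|)%N -> (#|A|%:R : R) != 0.
Proof. by move=> h; rewrite pnatr_eq0 -lt0n. Qed.

Lemma aeval_avg (R : realFieldType) (n p q : nat) (I : finType) (A : {pred I})
  (FF : I -> Fvar R n q) (GG : I -> Gvar R n p) (e : aform R n p q) :
  (0 < #|A|)%N ->
  aeval e (fun i t => (#|A|%:R)^-1 * \sum_(s in A) FF s i t)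
          (fun i a j b => (#|A|%:R)^-1 * \sum_(s in A) GG s i a j b)
  = (#|A|%:R)^-1 * \sum_(s in A) aeval e (FF s) (GG s).
Proof.
move=> hA; have hnz := @avg_nz R _ _ hA.
rewrite /aeval big_split big_split /= !mulrDr sumr_const.

rewrite -[af0 e *+ _]mulr_natr mulrCA mulVf // mulr1.
congr (_ + _ + _).
- under eq_bigr => i _ do under eq_bigr => t _ do rewrite mulrCA mulr_sumr.
  under eq_bigr => i _ do rewrite -mulr_sumr.
  rewrite -mulr_sumr; congr (_ * _).
  rewrite [RHS]exchange_big; apply: eq_bigr => i _ /=.
  by rewrite [RHS]exchange_big.
- under eq_bigr => i _ do under eq_bigr => a _ do under eq_bigr => j _ do
    under eq_bigr => b _ do rewrite mulrCA mulr_sumr.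
  under eq_bigr => i _ do under eq_bigr => a _ do under eq_bigr => j _ do
    rewrite -mulr_sumr.
  under eq_bigr => i _ do under eq_bigr => a _ do rewrite -mulr_sumr.
  under eq_bigr => i _ do rewrite -mulr_sumr.
  rewrite -mulr_sumr; congr (_ * _).
  rewrite [RHS]exchange_big; apply: eq_bigr => i _ /=.
  rewrite [RHS]exchange_big; apply: eq_bigr => a _ /=.
  rewrite [RHS]exchange_big; apply: eq_bigr => j _ /=.
  by rewrite [RHS]exchange_big.
Qed.

Lemma psd_avg (R : realFieldType) (m : nat) (I : finType) (A : {pred I})
  (MM : I -> 'M[R]_m) :
  (forall s, s \in A -> psdmx (MM s)) ->
  psdmx ((#|A|%:R)^-1 *: \sum_(s in A) MM s).
Proof.
move=> hM; split.
  apply/matrixP => r s; rewrite !mxE !summxE; congr (_ * _).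
  apply: eq_bigr => k hk; have [hs _] := hM k hk.
  by have := congr1 (fun N : 'M_m => N r s) hs; rewrite mxE => ->.
move=> x; rewrite -scalemxAr -scalemxAl mxE mulmx_sumr mulmx_suml summxE.
apply: mulr_ge0; first by rewrite invr_ge0 ler0n.
by apply: sumr_ge0 => k hk; have [_ ->] := hM k hk.
Qed.

Definition quadf (R : realFieldType) (n p q : nat) (x : 'I_n -> 'I_p -> R) : aform R n p q :=
  AForm 0 (fun _ _ => 0) (fun i a j b => x i a * x j b).
Arguments quadf {R n p} q x.

Lemma quadfE (R : realFieldType) (n p q : nat) (x : 'I_n -> 'I_p -> R) (F : Fvar R n q) (G : Gvar R n p) :
  \sum_i \sum_a \sum_j \sum_b x i a * G i a j b * x j b = aeval (quadf q x) F G.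
Proof.
rewrite /aeval /= [X in _ + X + _]big1 ?add0r; last by move=> i _; rewrite big1 // => t _; rewrite mul0r.
apply: eq_bigr => i _; apply: eq_bigr => a _; apply: eq_bigr => j _; apply: eq_bigr => b _.
by rewrite mulrAC.
Qed.
Arguments quadfE {R n p q} x F G.

Lemma feasible_avg (R : realFieldType) (n p q : nat) (P : pep R n p q)
  (I : finType) (A : {pred I})
  (FF : I -> Fvar R n q) (GG : I -> Gvar R n p) :
  (0 < #|A|)%N -> (forall s, s \in A -> feasible P (FF s) (GG s)) ->
  feasible P (fun i t => (#|A|%:R)^-1 * \sum_(s in A) FF s i t)
          (fun i a j b => (#|A|%:R)^-1 * \sum_(s in A) GG s i a j b)
  /\ objective P (fun i t => (#|A|%:R)^-1 * \sum_(s in A) FF s i t)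
          (fun i a j b => (#|A|%:R)^-1 * \sum_(s in A) GG s i a j b)
   = (#|A|%:R)^-1 * \sum_(s in A) objective P (FF s) (GG s).
Proof.
move=> hA hf; split; last by rewrite /objective aeval_avg.
split; [split|split; [|split]].
- move=> i a j b; congr (_ * _); apply: eq_bigr => s hs.
  by have [[hG _] _] := hf s hs; rewrite hG.
- move=> x; rewrite (quadfE x (fun i t => (#|A|%:R)^-1 * \sum_(s in A) FF s i t)).
  rewrite aeval_avg //; apply: mulr_ge0; first by rewrite invr_ge0 ler0n.
  apply: sumr_ge0 => s hs; rewrite -(quadfE x (FF s)).
  by have [[_ hG] _] := hf s hs.
- move=> k; rewrite aeval_avg // big1 ?mulr0 // => s hs.
  by have [_ [h _]] := hf s hs.
- move=> k; rewrite aeval_avg //; apply: mulr_ge0; first by rewrite invr_ge0 ler0n.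
  by apply: sumr_ge0 => s hs; have [_ [_ [h _]]] := hf s hs.
- move=> l.
  have -> : (\matrix_(r, s) aeval (lmic _ _ _ _ P l r s)
        (fun i t => (#|A|%:R)^-1 * \sum_(s in A) FF s i t)
        (fun i a j b => (#|A|%:R)^-1 * \sum_(s in A) GG s i a j b))
      = (#|A|%:R)^-1 *: \sum_(s in A) \matrix_(r, s0) aeval (lmic _ _ _ _ P l r s0) (FF s) (GG s).
    apply/matrixP => r s0; rewrite !mxE aeval_avg // summxE; congr (_ * _).
    by apply: eq_bigr => s _; rewrite mxE.
  by apply: psd_avg => s hs; have [_ [_ [_ h]]] := hf s hs.
Qed.
Definition permF (R : realFieldType) (n q : nat) (s : {perm 'I_n}) (F : Fvar R n q) : Fvar R n q :=
  fun k t => F (s k) t.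
Definition permG (R : realFieldType) (n p : nat) (s : {perm 'I_n}) (G : Gvar R n p) : Gvar R n p :=
  fun k a l b => G (s k) a (s l) b.
Arguments permF {R n q} s F.
Arguments permG {R n p} s G.

Lemma perm_ok (R : realFieldType) (n p q : nat) (P : pep R n p q)
  (U : nat) (c : 'I_n -> 'I_U)
  (hc : forall i j : 'I_n, c i = c j <-> agents_equiv P i j) :
  forall s : {perm 'I_n}, (forall x, c (s x) = c x) ->
  forall F G, feasible P F G ->
  feasible P (permF s F) (permG s G) /\ objective P (permF s F) (permG s G) = objective P F G.
Proof.
suff H : forall m (s : {perm 'I_n}), (#|[pred x | s x != x]| <= m)%N ->
  (forall x, c (s x) = c x) ->
  forall F G, feasible P F G ->
  feasible P (permF s F) (permG s G) /\ objective P (permF s F) (permG s G) = objective P F G.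
  by move=> s; apply: (H _ s (leqnn _)).
elim=> [|m IH] s hm hs F G hFG.
  have e : forall x, s x = x.
    move=> x; apply/eqP; apply: contraT => hx.
    by move: hm; rewrite leqn0 => /eqP/card0_eq/(_ x); rewrite inE hx.
  have -> : permF s F = F.
    by apply: functional_extensionality => k; apply: functional_extensionality => t; rewrite /permF e.
  have -> : permG s G = G.
    apply: functional_extensionality => k; apply: functional_extensionality => a.
    apply: functional_extensionality => l; apply: functional_extensionality => b.
    by rewrite /permG !e.
  by [].
have [e|] := boolP [forall x, s x == x].
  have e' : forall x, s x = x by move=> x; apply/eqP; move/forallP: e.
  have -> : permF s F = F.
    by apply: functional_extensionality => k; apply: functional_extensionality => t; rewrite /permF e'.
  have -> : permG s G = G.
    apply: functional_extensionality => k; apply: functional_extensionality => a.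
    apply: functional_extensionality => l; apply: functional_extensionality => b.
    by rewrite /permG !e'.
  by [].
rewrite negb_forall => /existsP [k hk].
pose t := tperm k (s k).
pose s' := (s * t)%g.
have ct : forall y, c (t y) = c y.
  move=> y; rewrite /t; case: tpermP; [move=> ->; exact: hs| move=> ->; by rewrite hs|by []].
have hs' : forall x, c (s' x) = c x by move=> x; rewrite permM ct hs.
have hcard : (#|[pred x | s' x != x]| <= m)%N.
  rewrite -ltnS; apply: leq_trans hm; apply: proper_card; apply/properP; split.
    apply/subsetP => x; rewrite !inE permM; apply: contra => /eqP hx.
    have hkx : k != x by apply: contraNneq hk => ->; rewrite hx.
    have hskx : s k != x.
      apply/eqP => hsx; have : s x = s k by rewrite hx.
      by move/perm_inj => hxk; move: hkx; rewrite hxk eqxx.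
    by rewrite hx /t tpermD.
  exists k; first by rewrite inE.
  by rewrite inE permM /t tpermR negbK.
have hequiv : agents_equiv P k (s k) by apply/hc; rewrite hs.
have [hF1 ho1] := hequiv F G hFG.
have [hF2 ho2] := IH s' hcard hs' _ _ hF1.
have eF : permF s F = permF s' (swapF k (s k) F).
  apply: functional_extensionality => x; apply: functional_extensionality => u.
  by rewrite /permF /swapF permM tpermK.
have eG : permG s G = permG s' (swapG k (s k) G).
  apply: functional_extensionality => x; apply: functional_extensionality => a.
  apply: functional_extensionality => y; apply: functional_extensionality => b.
  by rewrite /permG /swapG !permM !tpermK.
by rewrite eF eG; split => //; rewrite ho2 ho1.
Qed.
Lemma avg_orbit (R : realFieldType) (n : nat) (X : finType) (H : {set {perm 'I_n}})
  (act : {perm 'I_n} -> X -> X) (x0 : X) (T : {set X}) (f : X -> R) :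
  (1%g \in H) -> (forall s t, s \in H -> t \in H -> (s * t)%g \in H) ->
  (forall s t, act (s * t)%g x0 = act t (act s x0)) -> act 1%g x0 = x0 ->
  (forall s, s \in H -> act s x0 \in T) ->
  (forall x y, x \in T -> y \in T -> exists2 t, t \in H & act t x = y) ->
  (#|H|%:R)^-1 * \sum_(s in H) f (act s x0) = (#|T|%:R)^-1 * \sum_(y in T) f y.
Proof.
move=> h1 hmul hact hact1 hT htr.
pose N y := #|[pred s | (s \in H) && (act s x0 == y)]|.
have hpart : forall g : X -> R, \sum_(s in H) g (act s x0) = \sum_(y in T) g y *+ N y.
  move=> g; rewrite (partition_big (fun s => act s x0) (mem T)) //=.
  apply: eq_bigr => y yT.
  rewrite (eq_bigr (fun _ => g y)); last by move=> s /andP[_ /eqP ->].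
  by rewrite sumr_const.
have hle : forall y y', y \in T -> y' \in T -> (N y <= N y')%N.
  move=> y y' hy hy'; have [t ht hty] := htr y y' hy hy'.
  rewrite /N -(card_imset _ (mulIg t)); apply: subset_leq_card.
  apply/subsetP => z /imsetP [s]; rewrite inE => /andP [hs /eqP hsy] ->.
  by rewrite inE hmul //= hact hsy hty eqxx.
have x0T : x0 \in T by rewrite -hact1 hT.
have hN : forall y, y \in T -> N y = N x0.
  by move=> y hy; apply/eqP; rewrite eqn_leq !hle.
have hH : (#|H|%:R : R) = (N x0)%:R * #|T|%:R.
  have e1 := hpart (fun _ => 1); rewrite /= sumr_const in e1; rewrite e1.
  rewrite (eq_bigr (fun _ => (N x0)%:R)); last by move=> y hy; rewrite hN.
  by rewrite sumr_const mulr_natr.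
have hHpos : (0 < #|H|)%N by apply/card_gt0P; exists 1%g.
have hTpos : (0 < #|T|)%N by apply/card_gt0P; exists x0.
have hNz : ((N x0)%:R : R) != 0.
  apply: contraTneq hHpos => h0; move: hH; rewrite h0 mul0r => /eqP.
  by rewrite pnatr_eq0 => /eqP ->.
have hTz : (#|T|%:R : R) != 0 by rewrite pnatr_eq0 -lt0n.
rewrite hpart hH (eq_bigr (fun y => f y * (N x0)%:R)); last first.
  by move=> y hy; rewrite hN // mulr_natr.
rewrite -mulr_suml; field; by apply/andP; split.
Qed.
Definition Hset (n U : nat) (c : 'I_n -> 'I_U) : {set {perm 'I_n}} :=
  [set s : {perm 'I_n} | [forall x, c (s x) == c x]].
Arguments Hset {n U} c.

Lemma HsetP {n U : nat} {c : 'I_n -> 'I_U} {s : {perm 'I_n}} :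
  reflect (forall x, c (s x) = c x) (s \in Hset c).
Proof.
rewrite inE; apply: (iffP forallP) => h x; first by apply/eqP.
by rewrite h.
Qed.

Lemma Hset1 {n U : nat} (c : 'I_n -> 'I_U) : 1%g \in Hset c.
Proof. by apply/HsetP => x; rewrite perm1. Qed.

Lemma HsetM {n U : nat} (c : 'I_n -> 'I_U) s t :
  s \in Hset c -> t \in Hset c -> (s * t)%g \in Hset c.
Proof.
move=> /HsetP hs /HsetP ht; apply/HsetP => x; by rewrite permM ht hs.
Qed.

Lemma tpermH {n U : nat} (c : 'I_n -> 'I_U) k k' :
  c k = c k' -> tperm k k' \in Hset c.
Proof.
move=> e; apply/HsetP => y; case: tpermP => [->|->|_ _] //.
Qed.

Lemma pair_tr {n U : nat} (c : 'I_n -> 'I_U) k l k' l' :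
  c k = c k' -> c l = c l' -> k != l -> k' != l' ->
  exists2 t, t \in Hset c & t k = k' /\ t l = l'.
Proof.
move=> ek el hkl hkl'.
pose t1 := tperm k k'; pose m := t1 l; pose t2 := tperm m l'.
have hm : c m = c l by rewrite /m /t1; case: tpermP => [->|->|_ _] //.
exists (t1 * t2)%g.
  apply: HsetM; first exact: tpermH.
  by apply: tpermH; rewrite hm.
rewrite !permM /t1 tpermL; split.
  have h1 : m != k'.
    by rewrite /m /t1 -{2}(tpermL k k') (inj_eq perm_inj) eq_sym.
  have h2 : l' != k' by rewrite eq_sym.
  by rewrite /t2 tpermD.
by rewrite -/t1 -/m /t2 tpermL.
Qed.

Lemma symF_avg (R : realFieldType) (n q U : nat) (c : 'I_n -> 'I_U) (F : Fvar R n q) :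
  symF c F = fun i t => (#|Hset c|%:R)^-1 * \sum_(s in Hset c) permF s F i t.
Proof.
apply: functional_extensionality => i; apply: functional_extensionality => t.
rewrite /symF /permF.
rewrite (@avg_orbit R n _ (Hset c) (fun s k => s k) i [set k | c k == c i] (fun k => F k t)).
- by congr (_ * _); apply: eq_bigl => k; rewrite inE.
- exact: Hset1.
- exact: HsetM.
- by move=> s s'; rewrite permM.
- by rewrite perm1.
- by move=> s /HsetP hs; rewrite inE hs.
- move=> x y; rewrite !inE => /eqP hx /eqP hy; exists (tperm x y).
    by apply: tpermH; rewrite hx hy.
  by rewrite tpermL.
Qed.

Lemma card_pairs_same {n U : nat} (c : 'I_n -> 'I_U) (u : 'I_U) :
  (\sum_(k | c k == u) \sum_(l | (c l == u) && (l != k)) 1)%N = (csize c u * (csize c u).-1)%N.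
Proof.
rewrite (eq_bigr (fun _ => (csize c u).-1)).
  rewrite (eq_bigl (fun k => k \in [set k | c k == u])); last by move=> k; rewrite inE.
  by rewrite sum_nat_const.
move=> k hk; rewrite sum1dep_card /csize (cardD1 k [set k | c k == u]) inE hk /=.
by apply: eq_card => l; rewrite !inE andbC.
Qed.

Lemma card_pairs_diff {n U : nat} (c : 'I_n -> 'I_U) (u v : 'I_U) :
  (\sum_(k | c k == u) \sum_(l | c l == v) 1)%N = (csize c u * csize c v)%N.
Proof.
rewrite (eq_bigr (fun _ => csize c v)).
  rewrite (eq_bigl (fun k => k \in [set k | c k == u])); last by move=> k; rewrite inE.
  by rewrite sum_nat_const.
by move=> k hk; rewrite sum1dep_card.
Qed.

Lemma symG_avg (R : realFieldType) (n p U : nat) (c : 'I_n -> 'I_U) (G : Gvar R n p) :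
  symG c G = fun i a j b => (#|Hset c|%:R)^-1 * \sum_(s in Hset c) permG s G i a j b.
Proof.
apply: functional_extensionality => i; apply: functional_extensionality => a.
apply: functional_extensionality => j; apply: functional_extensionality => b.
rewrite /symG /permG.
have hH1 := Hset1 c; have hHM := @HsetM n U c.
case: (eqVneq i j) => [<-|hij].
  rewrite (@avg_orbit R n _ (Hset c) (fun s k => s k) i [set k | c k == c i]
            (fun k => G k a k b)) //.
  - by congr (_ * _); apply: eq_bigl => k; rewrite inE.
  - by move=> s s'; rewrite permM.
  - by rewrite perm1.
  - by move=> s /HsetP hs; rewrite inE hs.
  - move=> x y; rewrite !inE => /eqP hx /eqP hy; exists (tperm x y).
      by apply: tpermH; rewrite hx hy.
    by rewrite tpermL.
case: (eqVneq (c j) (c i)) => hc.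
  rewrite (@avg_orbit R n _ (Hset c) (fun s kl => (s kl.1, s kl.2)) (i, j)
     [set kl | (c kl.1 == c i) && ((c kl.2 == c i) && (kl.2 != kl.1))]
     (fun kl => G kl.1 a kl.2 b)) //.
  - have eT : #|[set kl | (c kl.1 == c i) && ((c kl.2 == c i) && (kl.2 != kl.1))]|
              = (csize c (c i) * (csize c (c i)).-1)%N.
      by rewrite -card_pairs_same pair_big_dep /= sum1dep_card.
    rewrite eT; congr (_ * _).
    by rewrite pair_big_dep; apply: eq_bigl => kl; rewrite inE.
  - by move=> s s'; rewrite !permM.
  - by rewrite !perm1.
  - move=> s /HsetP hs; rewrite inE /= !hs hc eqxx /= (inj_eq perm_inj).
    by rewrite eq_sym.
  - move=> [k l] [k' l']; rewrite !inE /= => /andP [/eqP hk /andP [/eqP hl hlk]]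
      /andP [/eqP hk' /andP [/eqP hl' hlk']].
    have n1 : k != l by rewrite eq_sym.
    have n2 : k' != l' by rewrite eq_sym.
    have [t ht [e1 e2]] := pair_tr c _ _ _ _ (etrans hk (esym hk')) (etrans hl (esym hl')) n1 n2.
    by exists t => //=; rewrite e1 e2.
rewrite (@avg_orbit R n _ (Hset c) (fun s kl => (s kl.1, s kl.2)) (i, j)
   [set kl | (c kl.1 == c i) && (c kl.2 == c j)]
   (fun kl => G kl.1 a kl.2 b)) //.
- have eT : #|[set kl | (c kl.1 == c i) && (c kl.2 == c j)]|
            = (csize c (c i) * csize c (c j))%N.
    by rewrite -card_pairs_diff pair_big_dep /= sum1dep_card.
  rewrite eT; congr (_ * _).
  by rewrite pair_big_dep; apply: eq_bigl => kl; rewrite inE.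
- by move=> s s'; rewrite !permM.
- by rewrite !perm1.
- by move=> s /HsetP hs; rewrite inE /= !hs !eqxx.
- move=> [k l] [k' l']; rewrite !inE /= => /andP [/eqP hk /eqP hl]
    /andP [/eqP hk' /eqP hl'].
  have hkl : forall x y, c x = c i -> c y = c j -> x != y.
    by move=> x y hx hy; apply: contra_neq hc => exy; rewrite -hy -exy hx.
  have [t ht [e1 e2]] := pair_tr c _ _ _ _ (etrans hk (esym hk')) (etrans hl (esym hl')) (hkl _ _ hk hl) (hkl _ _ hk' hl').
  by exists t => //=; rewrite e1 e2.
Qed.

Theorem proposition4 (R : realFieldType) (n p q : nat) (P : pep R n p q)
  (U : nat) (c : 'I_n -> 'I_U)
  (hc : forall i j : 'I_n, c i = c j <-> agents_equiv P i j)
  (F : Fvar R n q) (G : Gvar R n p)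
  (hF : feasible P F G) :
  feasible P (symF c F) (symG c G) /\
  objective P (symF c F) (symG c G) = objective P F G.
Proof.
have hHpos : (0 < #|Hset c|)%N by apply/card_gt0P; exists 1%g; exact: Hset1.
have hfe : forall s, s \in Hset c -> feasible P (permF s F) (permG s G).
  by move=> s /HsetP hs; have [h _] := @perm_ok R n p q P U c hc s hs F G hF.
have [hf ho] := @feasible_avg R n p q P _ (mem (Hset c))
   (fun s => permF s F) (fun s => permG s G) hHpos hfe.
rewrite symF_avg symG_avg; split; first exact: hf.
rewrite ho (eq_bigr (fun _ => objective P F G)); last first.
  by move=> s /HsetP hs; have [_ h] := @perm_ok R n p q P U c hc s hs F G hF.
have hz : (#|mem (Hset c)|%:R : R) != 0 by rewrite pnatr_eq0 -lt0n.
by rewrite sumr_const; field.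
Qed.
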